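(* Let $\omega$ be a rectilinearly-convex obstacle and let $S^*$ be a skeleton for $\omega$. Then for each of the four extreme edges $e_i$ ($1\le i\le 4$) of $\omega$ there exists an edge in $S^*$ with an endpoint on $e_i$.
   Context: An obstacle $\omega$ is a simple polygon in $\mathbb{R}^2$ (a closed, bounded polygonal region without holes whose boundary does not intersect itself), assumed in general position (no three of its vertices are collinear); edges of $\omega$ are those of its boundary. $\omega$ is rectilinear if each edge is horizontal or vertical, and a rectilinear obstacle is rectilinearly-convex if any two points of $\omega$ can be joined by a shortest rectilinear path (made of horizontal and vertical segments, of minimum $\ell_1$ length) contained in $\omega$. A corner point of a rectilinear path is a point where a horizontal and a vertical segment of the path meet. A set $S$ of closed line segments is inside $\omega$ if the union of its elements is contained in $\omega$. Such an $S$ is a skeleton for $\omega$ if for every pair of points $p,q$ not in the interior of $\omega$ such that every shortest rectilinear path between $p$ and $q$ with at most one corner point meets the interior of $\omega$, each such path intersects some element of $S$. The bounding box $B(\omega)$ is the smallest closed axis-parallel rectangle containing $\omega$; the extreme edges of $\omega$ are the edges of $\omega$ lying on the boundary of $B(\omega)$ (a rectilinearly-convex obstacle has exactly four: left, right, bottom, top). *)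

(* Defs.v *)
From Stdlib Require Import Reals List.
Import ListNotations.
Open Scope R_scope.

Definition pt := (R * R)%type.
Definition region := pt -> Prop.

Definition seg (a b : pt) : region := fun p =>
  exists t, 0 <= t <= 1 /\
    p = (fst a + t * (fst b - fst a), snd a + t * (snd b - snd a)).

Definition dist2 (p q : pt) : R := (fst p - fst q) ^ 2 + (snd p - snd q) ^ 2.
Definition interior (A : region) : region := fun p =>
  exists e, 0 < e /\ forall q, dist2 p q < e ^ 2 -> A q.
Definition closure (A : region) : region := fun p =>
  forall e, 0 < e -> exists q, dist2 p q < e ^ 2 /\ A q.
Definition frontier (A : region) : region := fun p => closure A p /\ ~ interior A p.
Definition closed_set (A : region) : Prop := forall p, closure A p -> A p.
Definition bounded_set (A : region) : Prop :=
  exists M, forall p, A p -> Rabs (fst p) <= M /\ Rabs (snd p) <= M.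

(** Polygon given by its cyclic list of vertices V = [v_0; ...; v_{n-1}];
    edge i joins v_i and v_{i+1 mod n}. *)
Definition vtx (V : list pt) (i : nat) : pt := nth (i mod length V) V (0, 0).
Definition edge_of (V : list pt) (i : nat) : region := seg (vtx V i) (vtx V (S i)).

Definition simple_polygon (V : list pt) : Prop :=
  (3 <= length V)%nat /\
  forall i j, (i < j < length V)%nat -> forall p,
    edge_of V i p -> edge_of V j p ->
    (j = S i /\ p = vtx V j) \/ (i = 0%nat /\ j = (length V - 1)%nat /\ p = vtx V 0).

Definition collinear (a b c : pt) : Prop :=
  (fst b - fst a) * (snd c - snd a) - (snd b - snd a) * (fst c - fst a) = 0.

Definition general_position (V : list pt) : Prop :=
  forall i j k, (i < length V)%nat -> (j < length V)%nat -> (k < length V)%nat ->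
    i <> j -> j <> k -> i <> k -> ~ collinear (vtx V i) (vtx V j) (vtx V k).

Definition is_obstacle (V : list pt) (w : region) : Prop :=
  simple_polygon V /\ general_position V /\
  closed_set w /\ bounded_set w /\ (exists p, interior w p) /\
  (forall p, frontier w p <-> exists i, (i < length V)%nat /\ edge_of V i p).

Definition rectilinear (V : list pt) : Prop :=
  forall i, (i < length V)%nat ->
    fst (vtx V i) = fst (vtx V (S i)) \/ snd (vtx V i) = snd (vtx V (S i)).

(** Rectilinear paths: a start point a followed by the list l of the
    successive points; consecutive points are joined by horizontal or
    vertical segments. The path ends at [last l a]. *)
Definition axis_aligned (a b : pt) : Prop := fst a = fst b \/ snd a = snd b.

Fixpoint rpath_ok (a : pt) (l : list pt) : Prop :=
  match l with [] => True | b :: l' => axis_aligned a b /\ rpath_ok b l' end.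

Fixpoint rpath_len (a : pt) (l : list pt) : R :=
  match l with
  | [] => 0
  | b :: l' => Rabs (fst a - fst b) + Rabs (snd a - snd b) + rpath_len b l'
  end.

Fixpoint rpath_pts (a : pt) (l : list pt) : region :=
  match l with
  | [] => fun x => x = a
  | b :: l' => fun x => seg a b x \/ rpath_pts b l' x
  end.

Fixpoint rpath_segs (a : pt) (l : list pt) : list (pt * pt) :=
  match l with [] => [] | b :: l' => (a, b) :: rpath_segs b l' end.

Definition rpath_between (p q : pt) (l : list pt) : Prop :=
  rpath_ok p l /\ last l p = q.

Definition shortest_rpath (p q : pt) (l : list pt) : Prop :=
  rpath_between p q l /\
  forall l', rpath_between p q l' -> rpath_len p l <= rpath_len p l'.

Definition hseg (s : pt * pt) : Prop := snd (fst s) = snd (snd s) /\ fst (fst s) <> fst (snd s).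
Definition vseg (s : pt * pt) : Prop := fst (fst s) = fst (snd s) /\ snd (fst s) <> snd (snd s).

Definition corner_point (a : pt) (l : list pt) (c : pt) : Prop :=
  exists s1 s2, In s1 (rpath_segs a l) /\ In s2 (rpath_segs a l) /\
    hseg s1 /\ vseg s2 /\
    (c = fst s1 \/ c = snd s1) /\ (c = fst s2 \/ c = snd s2).

Definition at_most_one_corner (a : pt) (l : list pt) : Prop :=
  forall c1 c2, corner_point a l c1 -> corner_point a l c2 -> c1 = c2.

Definition rect_convex (V : list pt) (w : region) : Prop :=
  rectilinear V /\
  forall p q, w p -> w q ->
    exists l, shortest_rpath p q l /\ forall x, rpath_pts p l x -> w x.

(** Sets of closed segments, given as finite lists of endpoint pairs. *)
Definition seg_of (s : pt * pt) : region := seg (fst s) (snd s).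

Definition inside (w : region) (S : list (pt * pt)) : Prop :=
  forall s x, In s S -> seg_of s x -> w x.

Definition skeleton (w : region) (S : list (pt * pt)) : Prop :=
  inside w S /\
  forall p q, ~ interior w p -> ~ interior w q ->
    (forall l, shortest_rpath p q l -> at_most_one_corner p l ->
       exists x, rpath_pts p l x /\ interior w x) ->
    forall l, shortest_rpath p q l -> at_most_one_corner p l ->
      exists s x, In s S /\ seg_of s x /\ rpath_pts p l x.

Definition rect (x1 x2 y1 y2 : R) : region := fun p =>
  x1 <= fst p <= x2 /\ y1 <= snd p <= y2.

Definition is_bbox (w : region) (x1 x2 y1 y2 : R) : Prop :=
  (forall p, w p -> rect x1 x2 y1 y2 p) /\
  forall a b c d, (forall p, w p -> rect a b c d p) ->
    forall p, rect x1 x2 y1 y2 p -> rect a b c d p.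

Definition extreme_edge (V : list pt) (w : region) (i : nat) : Prop :=
  (i < length V)%nat /\
  exists x1 x2 y1 y2, is_bbox w x1 x2 y1 y2 /\
    forall p, edge_of V i p -> frontier (rect x1 x2 y1 y2) p.

(* Main.v *)
Require Import Defs.
From Stdlib Require Import Reals List Lia Lra Arith Classical.
Import ListNotations.
Import Defs.
Open Scope R_scope.

Definition l1 (a b : pt) : R := Rabs (fst a - fst b) + Rabs (snd a - snd b).
Definition between (x y c : R) : Prop := (x <= c <= y) \/ (y <= c <= x).
Definition lin (f : pt -> R) : Prop := forall a b t,
  f (fst a + t * (fst b - fst a), snd a + t * (snd b - snd a)) = f a + t * (f b - f a).

Lemma btw_step x y z c : between x z c -> ~ between x y c -> between y z c.
Proof. unfold between; intros. destruct (Rle_dec y z); intuition lra. Qed.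

Lemma last_nonempty_indep (l : list pt) (b d : pt) : l <> [] -> last l b = last l d.
Proof.
  induction l as [|x l IH]; intros H; [congruence|].
  destruct l as [|y l']; [reflexivity|]. simpl. simpl in IH. apply IH. discriminate.
Qed.

Lemma last_cons (b a : pt) l : last (b :: l) a = last l b.
Proof.
  destruct l as [|x l]; [reflexivity|].
  change (last (b :: x :: l) a) with (last (x :: l) a).
  apply last_nonempty_indep; discriminate.
Qed.

Lemma seg_start a b : seg a b a.
Proof. exists 0. split; [lra|]. destruct a; simpl; f_equal; ring. Qed.
Lemma seg_end a b : seg a b b.
Proof. exists 1. split; [lra|]. destruct a, b; simpl; f_equal; ring. Qed.

Lemma conn f (Hf : lin f) : forall l a c, between (f a) (f (last l a)) c ->
  exists z, rpath_pts a l z /\ f z = c.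
Proof.
  induction l as [|b l IH]; intros a c Hb.
  - simpl in Hb. exists a. split; [reflexivity|]. unfold between in Hb; lra.
  - rewrite last_cons in Hb.
    destruct (classic (between (f a) (f b) c)) as [H|H].
    + destruct (Req_dec (f a) (f b)) as [E|E].
      * exists a. split; [left; apply seg_start|]. unfold between in H; lra.
      * set (t := (c - f a) / (f b - f a)).
        assert (Ht : t * (f b - f a) = c - f a) by (unfold t; field; lra).
        exists (fst a + t * (fst b - fst a), snd a + t * (snd b - snd a)).
        split.
        -- left. exists t. split; [|reflexivity].
           unfold between in H. destruct (Rle_dec (f a) (f b)).
           ++ split; nra.
           ++ split; nra.
        -- rewrite Hf. lra.
    + destruct (IH b c (btw_step _ _ _ _ Hb H)) as [z [Hz1 Hz2]].
      exists z. split; [right; exact Hz1|exact Hz2].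
Qed.


Lemma l1_refl a : l1 a a = 0.
Proof. unfold l1. replace (fst a - fst a) with 0 by ring. replace (snd a - snd a) with 0 by ring. rewrite Rabs_R0; lra. Qed.

Lemma abs_tri x y z : Rabs (x - z) <= Rabs (x - y) + Rabs (y - z).
Proof. replace (x - z) with ((x - y) + (y - z)) by ring. apply Rabs_triang. Qed.

Lemma l1_tri a b c : l1 a c <= l1 a b + l1 b c.
Proof. unfold l1. pose proof (abs_tri (fst a) (fst b) (fst c)). pose proof (abs_tri (snd a) (snd b) (snd c)). lra. Qed.

Lemma abs_split x y t : 0 <= t <= 1 ->
  Rabs (x - (x + t * (y - x))) + Rabs ((x + t * (y - x)) - y) = Rabs (x - y).
Proof.
  intros Ht. unfold Rabs. repeat destruct Rcase_abs; nra.
Qed.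

Lemma l1_seg a b z : seg a b z -> l1 a z + l1 z b = l1 a b.
Proof.
  intros [t [Ht ->]]. unfold l1; simpl.
  rewrite <- (abs_split (fst a) (fst b) t Ht), <- (abs_split (snd a) (snd b) t Ht). ring.
Qed.

Lemma len_ge l a : l1 a (last l a) <= rpath_len a l.
Proof.
  revert a; induction l as [|b l IH]; intros a.
  - simpl. rewrite l1_refl. lra.
  - rewrite last_cons. simpl. pose proof (IH b). pose proof (l1_tri a b (last l b)).
    unfold l1 in *. lra.
Qed.

Lemma len_split l a z : rpath_pts a l z -> l1 a z + l1 z (last l a) <= rpath_len a l.
Proof.
  revert a; induction l as [|b l IH]; intros a Hz.
  - simpl in *. subst. rewrite l1_refl. lra.
  - rewrite last_cons. simpl in Hz |- *. destruct Hz as [Hz|Hz].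
    + pose proof (l1_seg _ _ _ Hz). pose proof (len_ge l b). pose proof (l1_tri z b (last l b)).
      unfold l1 in *. lra.
    + pose proof (IH b Hz). pose proof (l1_tri a b z). unfold l1 in *. lra.
Qed.

Lemma box p q l z : shortest_rpath p q l -> rpath_ok p [q] -> rpath_pts p l z ->
  l1 p z + l1 z q <= l1 p q.
Proof.
  intros [[Hok Hl] Hmin] Hq Hz.
  assert (H1 := Hmin [q] (conj Hq eq_refl)). simpl in H1.
  pose proof (len_split l p z Hz). rewrite Hl in H. unfold l1 in *. lra.
Qed.

Lemma single_shortest p q : axis_aligned p q -> shortest_rpath p q [q].
Proof.
  intros Hax. split; [split; [simpl; tauto|reflexivity]|].
  intros l' [_ Hl']. simpl. pose proof (len_ge l' p). rewrite Hl' in H. unfold l1 in H. lra.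
Qed.

Lemma single_amoc p q : at_most_one_corner p [q].
Proof.
  intros c1 c2 [s1 [s2 [H1 [H2 [Hh [Hv _]]]]]]. exfalso.
  simpl in H1, H2. destruct H1 as [H1|[]]; destruct H2 as [H2|[]]; subst.
  unfold hseg, vseg in *. simpl in *. tauto.
Qed.

Lemma dist_abs p q r : 0 < r -> dist2 p q < r ^ 2 -> Rabs (fst p - fst q) < r /\ Rabs (snd p - snd q) < r.
Proof.
  unfold dist2. intros Hr H.
  set (x := fst p - fst q) in *. set (y := snd p - snd q) in *.
  assert (0 <= x ^ 2) by apply pow2_ge_0. assert (0 <= y ^ 2) by apply pow2_ge_0.
  assert (x * x < r * r) by (simpl in *; nra). assert (y * y < r * r) by (simpl in *; nra).
  split; unfold Rabs; destruct Rcase_abs; nra.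
Qed.

Lemma interior_in A p : interior A p -> A p.
Proof. unfold interior. intros [e [He H]]. apply H. unfold dist2. replace (fst p - fst p) with 0 by ring. replace (snd p - snd p) with 0 by ring. simpl. nra. Qed.


Lemma vtx_mod V k : vtx V k = vtx V (k mod length V).
Proof. unfold vtx. rewrite Nat.Div0.mod_mod. reflexivity. Qed.

Lemma vtx_S_mod V k : vtx V (S k) = vtx V (S (k mod length V)).
Proof.
  unfold vtx. f_equal. replace (S k) with (k + 1)%nat by lia.
  replace (S (k mod length V)) with (k mod length V + 1)%nat by lia.
  rewrite Nat.Div0.add_mod_idemp_l. reflexivity.
Qed.

Lemma edge_mod V k p : edge_of V k p -> edge_of V (k mod length V) p.
Proof. unfold edge_of. rewrite <- vtx_S_mod, <- vtx_mod. auto. Qed.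

Lemma len_pos V w : is_obstacle V w -> (0 < length V)%nat.
Proof. intros [[H _] _]. lia. Qed.

Lemma edge_frontier V w k p : is_obstacle V w -> edge_of V k p -> frontier w p.
Proof.
  intros Hob He. pose proof (len_pos _ _ Hob) as Hn.
  destruct Hob as [_ [_ [_ [_ [_ Hf]]]]]. apply Hf. exists (k mod length V)%nat.
  split; [apply Nat.mod_upper_bound; lia|]. apply edge_mod; auto.
Qed.

Lemma edge_in_w V w k p : is_obstacle V w -> edge_of V k p -> w p.
Proof.
  intros Hob He. pose proof (edge_frontier _ _ _ _ Hob He) as [Hc _].
  destruct Hob as [_ [_ [Hcl _]]]. apply Hcl. exact Hc.
Qed.

Lemma edge_not_int V w k p : is_obstacle V w -> edge_of V k p -> ~ interior w p.
Proof. intros Hob He. apply (edge_frontier _ _ _ _ Hob He). Qed.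

Lemma vtx_edge V k : edge_of V k (vtx V k).
Proof. apply seg_start. Qed.
Lemma vtx_edge' V k : edge_of V k (vtx V (S k)).
Proof. apply seg_end. Qed.

Lemma vtx_in_w V w k : is_obstacle V w -> w (vtx V k).
Proof. intros Hob. eapply edge_in_w; [exact Hob| apply vtx_edge]. Qed.

Lemma gp3 V w i j k : is_obstacle V w ->
  (i mod length V <> j mod length V)%nat -> (j mod length V <> k mod length V)%nat ->
  (i mod length V <> k mod length V)%nat ->
  ~ collinear (vtx V i) (vtx V j) (vtx V k).
Proof.
  intros Hob H1 H2 H3. pose proof (len_pos _ _ Hob) as Hn.
  destruct Hob as [_ [Hgp _]].
  rewrite (vtx_mod V i), (vtx_mod V j), (vtx_mod V k).
  apply Hgp; try apply Nat.mod_upper_bound; lia.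
Qed.

Lemma mod_big x n : (n <= x < 2 * n)%nat -> (x mod n = x - n)%nat.
Proof.
  intros H. replace x with ((x - n) + 1 * n)%nat at 1 by lia.
  rewrite Nat.Div0.mod_add. apply Nat.mod_small. lia.
Qed.

Lemma len3 V w : is_obstacle V w -> (3 <= length V)%nat.
Proof. intros [[H _] _]. exact H. Qed.

Lemma rect_any V w k : is_obstacle V w -> rectilinear V -> axis_aligned (vtx V k) (vtx V (S k)).
Proof.
  intros Hob Hr. pose proof (len_pos _ _ Hob).
  rewrite (vtx_mod V k), (vtx_S_mod V k). apply Hr. apply Nat.mod_upper_bound; lia.
Qed.


Record frame (h u : pt -> R) (mk : R -> R -> pt) : Prop := {
 fr_lh : lin h; fr_lu : lin u;
 fr_hm : forall x y, h (mk x y) = y; fr_um : forall x y, u (mk x y) = x;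
 fr_mk : forall p, mk (u p) (h p) = p;
 fr_ax1 : forall a b, h a = h b -> axis_aligned a b;
 fr_ax2 : forall a b, axis_aligned a b -> u a = u b \/ h a = h b;
 fr_col : forall a b c, h a = h b -> h b = h c -> collinear a b c;
 fr_d : forall p q, dist2 p q = (u p - u q)^2 + (h p - h q)^2;
 fr_l1 : forall p q, l1 p q = Rabs (u p - u q) + Rabs (h p - h q) }.

Lemma absN x y : Rabs (- x - - y) = Rabs (x - y).
Proof. replace (- x - - y) with (- (x - y)) by ring. apply Rabs_Ropp. Qed.

Lemma frame_top : frame snd fst (fun x y => (x, y)).
Proof.
  split; unfold lin, axis_aligned, collinear, dist2, l1; simpl; intros;
  try (destruct p; simpl; f_equal; ring);
  try ring; try (rewrite !absN); try lra;
  try (destruct H; [left|right]; lra); try (destruct H; [right|left]; lra);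
  try (left; lra); try (right; lra); try tauto.
  all: try (replace (snd b) with (snd a) by lra; replace (snd c) with (snd a) by lra; ring).
  all: try (replace (fst b) with (fst a) by lra; replace (fst c) with (fst a) by lra; ring).
Qed.

Lemma frame_bot : frame (fun p => - snd p) fst (fun x y => (x, - y)).
Proof.
  split; unfold lin, axis_aligned, collinear, dist2, l1; simpl; intros;
  try (destruct p; simpl; f_equal; ring);
  try ring; try (rewrite !absN); try lra;
  try (destruct H; [left|right]; lra); try (destruct H; [right|left]; lra);
  try (left; lra); try (right; lra); try tauto.
  all: try (replace (snd b) with (snd a) by lra; replace (snd c) with (snd a) by lra; ring).
  all: try (replace (fst b) with (fst a) by lra; replace (fst c) with (fst a) by lra; ring).
Qed.

Lemma frame_right : frame fst snd (fun x y => (y, x)).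
Proof.
  split; unfold lin, axis_aligned, collinear, dist2, l1; simpl; intros;
  try (destruct p; simpl; f_equal; ring);
  try ring; try (rewrite !absN); try lra;
  try (destruct H; [left|right]; lra); try (destruct H; [right|left]; lra);
  try (left; lra); try (right; lra); try tauto.
  all: try (replace (snd b) with (snd a) by lra; replace (snd c) with (snd a) by lra; ring).
  all: try (replace (fst b) with (fst a) by lra; replace (fst c) with (fst a) by lra; ring).
Qed.

Lemma frame_left : frame (fun p => - fst p) snd (fun x y => (- y, x)).
Proof.
  split; unfold lin, axis_aligned, collinear, dist2, l1; simpl; intros;
  try (destruct p; simpl; f_equal; ring);
  try ring; try (rewrite !absN); try lra;
  try (destruct H; [left|right]; lra); try (destruct H; [right|left]; lra);
  try (left; lra); try (right; lra); try tauto.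
  all: try (replace (snd b) with (snd a) by lra; replace (snd c) with (snd a) by lra; ring).
  all: try (replace (fst b) with (fst a) by lra; replace (fst c) with (fst a) by lra; ring).
Qed.


Lemma fr_pt_eq h u mk (F : frame h u mk) p q : u p = u q -> h p = h q -> p = q.
Proof. intros H1 H2. rewrite <- (fr_mk _ _ _ F p), <- (fr_mk _ _ _ F q). congruence. Qed.

Lemma fr_seg h u mk (F : frame h u mk) a b z t : 0 <= t <= 1 ->
  u z = u a + t * (u b - u a) -> h z = h a + t * (h b - h a) -> seg a b z.
Proof.
  intros Ht H1 H2. exists t. split; [exact Ht|]. apply (fr_pt_eq _ _ _ F).
  - rewrite (fr_lu _ _ _ F). exact H1.
  - rewrite (fr_lh _ _ _ F). exact H2.
Qed.

Lemma fr_seg_h h u mk (F : frame h u mk) a b z : seg a b z ->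
  exists t, 0 <= t <= 1 /\ h z = h a + t * (h b - h a).
Proof. intros [t [Ht ->]]. exists t. split; [exact Ht|]. apply (fr_lh _ _ _ F). Qed.

Lemma fr_box h u mk (F : frame h u mk) p q l z : shortest_rpath p q l -> h p = h q ->
  rpath_pts p l z -> h z = h p.
Proof.
  intros Hs Hh Hz.
  assert (Hok : rpath_ok p [q]) by (simpl; split; [apply (fr_ax1 _ _ _ F); exact Hh|exact I]).
  pose proof (box p q l z Hs Hok Hz) as B. rewrite !(fr_l1 _ _ _ F) in B.
  pose proof (abs_tri (u p) (u z) (u q)). rewrite Hh in B.
  replace (h q - h q) with 0 in B by ring. rewrite Rabs_R0 in B.
  revert B H. unfold Rabs; repeat destruct Rcase_abs; intros; lra.
Qed.

Lemma mod_cases x n : (0 < n)%nat -> (x < 2 * n)%nat ->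
  (x mod n = x /\ x < n)%nat \/ (x mod n = x - n /\ n <= x)%nat.
Proof.
  intros H1 H2. destruct (Nat.lt_ge_cases x n).
  - left. split; [apply Nat.mod_small|]; lia.
  - right. split; [apply mod_big|]; lia.
Qed.

Lemma idx_dist n i : (3 <= n)%nat -> (i < n)%nat ->
  (i mod n <> (S i) mod n /\ (S i) mod n <> (S (S i)) mod n /\ i mod n <> (S (S i)) mod n /\
   (i + (n - 1)) mod n <> i mod n /\ (i + (n - 1)) mod n <> (S i) mod n)%nat.
Proof.
  intros Hn Hi.
  destruct (mod_cases i n) as [[A1 A2]|[A1 A2]]; try lia;
  destruct (mod_cases (S i) n) as [[B1 B2]|[B1 B2]]; try lia;
  destruct (mod_cases (S (S i)) n) as [[C1 C2]|[C1 C2]]; try lia;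
  destruct (mod_cases (i + (n - 1)) n) as [[D1 D2]|[D1 D2]]; try lia;
  rewrite A1, B1, C1, D1; lia.
Qed.

Lemma vtx_pred V i : (0 < length V)%nat -> vtx V (S (i + (length V - 1))) = vtx V i.
Proof.
  intros Hn. unfold vtx. f_equal.
  replace (S (i + (length V - 1))) with (i + 1 * length V)%nat by lia.
  apply Nat.Div0.mod_add.
Qed.

Lemma seg_cases h u mk (F : frame h u mk) p q E H : seg p q E -> h p <= H -> h q <= H -> h E = H ->
  (h p = H /\ h q = H) \/ E = p \/ E = q.
Proof.
  intros Hs Hp Hq HE. pose proof Hs as [t [Ht HEq]].
  destruct (fr_seg_h _ _ _ F _ _ _ Hs) as [t' [Ht' Hh]].
  assert (HE' : h E = h p + t * (h q - h p)) by (rewrite HEq; apply (fr_lh _ _ _ F)).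
  destruct (Req_dec (h p) H) as [E1|E1]; destruct (Req_dec (h q) H) as [E2|E2].
  - left; auto.
  - assert (t = 0) by nra. subst t. right; left. rewrite HEq. destruct p; simpl; f_equal; ring.
  - assert (t = 1) by nra. subst t. right; right. rewrite HEq. destruct p, q; simpl; f_equal; ring.
  - assert (t = 1) by nra. subst t. right; right. rewrite HEq. destruct p, q; simpl; f_equal; ring.
Qed.

Lemma seg_same a E : seg a a E -> E = a.
Proof. intros [t [_ ->]]. destruct a; simpl; f_equal; ring. Qed.

Lemma seg_sym a b E : seg b a E -> seg a b E.
Proof.
  intros [t [Ht ->]]. exists (1 - t). split; [lra|]. f_equal; ring.
Qed.

Lemma vert_arg V w h u mk (F : frame h u mk) i H : is_obstacle V w -> (i < length V)%nat ->
  (forall p, w p -> h p <= H) -> h (vtx V i) = H -> h (vtx V (S i)) = H ->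
  forall E, w E -> h E = H -> edge_of V i E.
Proof.
  intros Hob Hi Hw Ha Hb E HwE HE.
  pose proof (len3 _ _ Hob) as Hn3.
  destruct (idx_dist (length V) i Hn3 Hi) as [D1 _].
  assert (Hvk : forall k, h (vtx V k) = H -> vtx V k = vtx V i \/ vtx V k = vtx V (S i)).
  { intros k Hk.
    destruct (Nat.eq_dec (k mod length V) (i mod length V)) as [K|K].
    - left. rewrite (vtx_mod V k), (vtx_mod V i). congruence.
    - destruct (Nat.eq_dec (k mod length V) (S i mod length V)) as [K'|K'].
      + right. rewrite (vtx_mod V k), (vtx_mod V (S i)). congruence.
      + exfalso. apply (gp3 V w i (S i) k Hob); try lia.
        apply (fr_col _ _ _ F); congruence. }
  assert (Hni : ~ interior w E).
  { unfold interior. intros [r [Hr Hball]].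
    assert (Hq := Hball (mk (u E) (H + r / 2))).
    rewrite (fr_d _ _ _ F), (fr_um _ _ _ F), (fr_hm _ _ _ F) in Hq.
    assert (w (mk (u E) (H + r / 2))) by (apply Hq; rewrite HE; nra).
    apply Hw in H0. rewrite (fr_hm _ _ _ F) in H0. lra. }
  assert (Hfr : frontier w E).
  { split; [|exact Hni]. intros e He. exists E. split; [|exact HwE].
    unfold dist2. replace (fst E - fst E) with 0 by ring. replace (snd E - snd E) with 0 by ring. nra. }
  pose proof Hob as (_ & _ & _ & _ & _ & Hfch).
  apply Hfch in Hfr. destruct Hfr as [j [Hj Hej]].
  assert (Hv1 := Hw _ (vtx_in_w V w j Hob)).
  assert (Hv2 := Hw _ (vtx_in_w V w (S j) Hob)).
  assert (Hall : forall p, p = vtx V i \/ p = vtx V (S i) -> edge_of V i p).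
  { intros p [->| ->]; [apply vtx_edge|apply vtx_edge']. }
  destruct (seg_cases _ _ _ F _ _ _ _ Hej Hv1 Hv2 HE) as [[Q1 Q2]|[Q|Q]].
  - destruct (Hvk j Q1) as [R1|R1]; destruct (Hvk (S j) Q2) as [R2|R2];
    unfold edge_of in Hej; rewrite R1, R2 in Hej.
    + apply seg_same in Hej. apply Hall; auto.
    + exact Hej.
    + apply seg_sym. exact Hej.
    + apply seg_same in Hej. apply Hall; auto.
  - subst E. apply Hall. apply Hvk. exact HE.
  - subst E. apply Hall. apply Hvk. exact HE.
Qed.


Lemma sq_abs x y r : 0 < r -> x ^ 2 + y ^ 2 < r ^ 2 -> Rabs x < r /\ Rabs y < r.
Proof.
  intros Hr H.
  assert (0 <= x ^ 2) by apply pow2_ge_0. assert (0 <= y ^ 2) by apply pow2_ge_0.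
  assert (x * x < r * r) by (simpl in *; nra). assert (y * y < r * r) by (simpl in *; nra).
  split; unfold Rabs; destruct Rcase_abs; nra.
Qed.

Lemma list_bound (L : list (pt * pt)) (g : pt * pt -> R) H :
  (forall s, In s L -> g s < H) -> exists h0, h0 < H /\ forall s, In s L -> g s <= h0.
Proof.
  induction L as [|x L IH]; intros Hg.
  - exists (H - 1). split; [lra|]. intros s [].
  - destruct IH as [h0 [Hh0 Hs]]. { intros s Hs. apply Hg. right; exact Hs. }
    exists (Rmax (g x) h0). split.
    + apply Rmax_lub_lt; [apply Hg; left; reflexivity|exact Hh0].
    + intros s [<-|Hs']; [apply Rmax_l|]. eapply Rle_trans; [apply Hs; exact Hs'|apply Rmax_r].
Qed.

Lemma core V w Sk h u mk (F : frame h u mk) i H :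
  is_obstacle V w -> rect_convex V w -> skeleton w Sk -> (i < length V)%nat ->
  (forall p, w p -> h p <= H) -> h (vtx V i) = H -> h (vtx V (S i)) = H ->
  u (vtx V i) <> u (vtx V (S i)) ->
  exists s, In s Sk /\ (edge_of V i (fst s) \/ edge_of V i (snd s)).
Proof.
  intros Hob Hrc Hsk Hi Hw Ha Hb Hab.
  pose proof (len3 _ _ Hob) as Hn3.
  destruct (idx_dist (length V) i Hn3 Hi) as (D1 & D2 & D3 & D4 & D5).
  set (n := length V) in *.
  set (a := vtx V i) in *. set (b := vtx V (S i)) in *.
  set (c := vtx V (S (S i))). set (d := vtx V (i + (n - 1))).
  assert (Hda : vtx V (S (i + (n - 1))) = a) by (apply vtx_pred; lia).
  assert (Hc : u c = u b /\ h c < H).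
  { destruct (fr_ax2 _ _ _ F _ _ (rect_any V w (S i) Hob (proj1 Hrc))) as [E|E]; fold b c in E.
    - split; [symmetry; exact E|].
      assert (h c <= H) by (apply Hw; apply vtx_in_w; exact Hob).
      destruct (Req_dec (h c) H); [|lra]. exfalso.
      apply (gp3 V w i (S i) (S (S i)) Hob); auto.
      apply (fr_col _ _ _ F); fold a b c; lra.
    - exfalso. apply (gp3 V w i (S i) (S (S i)) Hob); auto.
      apply (fr_col _ _ _ F); fold a b c; lra. }
  assert (Hd : u d = u a /\ h d < H).
  { destruct (fr_ax2 _ _ _ F _ _ (rect_any V w (i + (n - 1)) Hob (proj1 Hrc))) as [E|E];
    rewrite Hda in E; fold d in E.
    - split; [exact E|].
      assert (h d <= H) by (apply Hw; apply vtx_in_w; exact Hob).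
      destruct (Req_dec (h d) H); [|lra]. exfalso.
      apply (gp3 V w (i + (n - 1)) i (S i) Hob); auto.
      apply (fr_col _ _ _ F); fold a b d; lra.
    - exfalso. apply (gp3 V w (i + (n - 1)) i (S i) Hob); auto.
      apply (fr_col _ _ _ F); fold a b d; lra. }
  destruct Hc as [Hc1 Hc2]. destruct Hd as [Hd1 Hd2].
  set (y0 := Rmax (h c) (h d)).
  assert (Hy0 : y0 < H) by (apply Rmax_lub_lt; auto).
  assert (Hcy : h c <= y0) by apply Rmax_l. assert (Hdy : h d <= y0) by apply Rmax_r.
  assert (HP : forall Y, y0 < Y < H -> edge_of V (i + (n - 1)) (mk (u a) Y)).
  { intros Y HY. unfold edge_of. rewrite Hda. fold d.
    set (t := (Y - h d) / (H - h d)).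
    assert (Ht : t * (H - h d) = Y - h d) by (unfold t; field; lra).
    apply (fr_seg _ _ _ F) with t.
    - split; nra.
    - rewrite (fr_um _ _ _ F). rewrite Hd1. ring.
    - rewrite (fr_hm _ _ _ F). rewrite Ha. lra. }
  assert (HQ : forall Y, y0 < Y < H -> edge_of V (S i) (mk (u b) Y)).
  { intros Y HY. unfold edge_of. fold b c.
    set (t := (H - Y) / (H - h c)).
    assert (Ht : t * (H - h c) = H - Y) by (unfold t; field; lra).
    apply (fr_seg _ _ _ F) with t.
    - split; nra.
    - rewrite (fr_um _ _ _ F). rewrite Hc1. ring.
    - rewrite (fr_hm _ _ _ F). rewrite Hb. lra. }
  assert (Hpass : forall Y m l, y0 < Y < H -> between (u a) (u b) m ->
     shortest_rpath (mk (u a) Y) (mk (u b) Y) l -> rpath_pts (mk (u a) Y) l (mk m Y)).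
  { intros Y m l HY Hm Hsh.
    assert (Hlast : last l (mk (u a) Y) = mk (u b) Y) by (destruct Hsh as [[_ E] _]; exact E).
    destruct (conn u (fr_lu _ _ _ F) l (mk (u a) Y) m) as [z [Hz1 Hz2]].
    { rewrite Hlast, !(fr_um _ _ _ F). exact Hm. }
    assert (Hhz : h z = Y).
    { rewrite (fr_box _ _ _ F _ _ _ _ Hsh); [apply (fr_hm _ _ _ F) | rewrite !(fr_hm _ _ _ F); reflexivity | exact Hz1]. }
    replace (mk m Y) with z; [exact Hz1|].
    apply (fr_pt_eq _ _ _ F); rewrite ?(fr_um _ _ _ F), ?(fr_hm _ _ _ F); auto. }
  assert (Hrect : forall m Y, between (u a) (u b) m -> y0 < Y < H -> w (mk m Y)).
  { intros m Y Hm HY.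
    assert (wP : w (mk (u a) Y)) by (eapply edge_in_w; [exact Hob|apply HP; exact HY]).
    assert (wQ : w (mk (u b) Y)) by (eapply edge_in_w; [exact Hob|apply HQ; exact HY]).
    destruct Hrc as [_ Hrc]. destruct (Hrc _ _ wP wQ) as [l [Hsh Hin]].
    apply Hin. apply Hpass; auto. }
  set (mid := (u a + u b) / 2).
  assert (Hmid : between (u a) (u b) mid).
  { unfold between, mid. destruct (Rle_dec (u a) (u b)); [left|right]; split; lra. }
  assert (Hint : forall Y, y0 < Y < H -> interior w (mk mid Y)).
  { intros Y HY.
    set (r := Rmin (Rabs (u b - u a) / 2) (Rmin (H - Y) (Y - y0))).
    assert (Hab' : 0 < Rabs (u b - u a)) by (apply Rabs_pos_lt; lra).
    assert (Hr : 0 < r) by (unfold r; repeat apply Rmin_glb_lt; lra).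
    assert (Hr1 : r <= Rabs (u b - u a) / 2) by apply Rmin_l.
    assert (Hr2 : r <= H - Y) by (eapply Rle_trans; [apply Rmin_r|apply Rmin_l]).
    assert (Hr3 : r <= Y - y0) by (eapply Rle_trans; [apply Rmin_r|apply Rmin_r]).
    exists r. split; [exact Hr|]. intros q Hq.
    rewrite (fr_d _ _ _ F), (fr_um _ _ _ F), (fr_hm _ _ _ F) in Hq.
    destruct (sq_abs _ _ _ Hr Hq) as [A1 A2].
    rewrite <- (fr_mk _ _ _ F q). apply Hrect.
    - revert A1 Hr1. unfold between, mid. unfold Rabs; repeat destruct Rcase_abs; intros;
      first [left; split; lra | right; split; lra].
    - revert A2 Hr2 Hr3. unfold Rabs; destruct Rcase_abs; intros; split; lra. }
  assert (Hhit : forall Y, y0 < Y < H -> exists s x, In s Sk /\ seg_of s x /\ h x = Y).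
  { intros Y HY. destruct Hsk as [Hins Hsk].
    set (P := mk (u a) Y). set (Q := mk (u b) Y).
    assert (HPQ : h P = h Q) by (unfold P, Q; rewrite !(fr_hm _ _ _ F); reflexivity).
    destruct (Hsk P Q (edge_not_int _ _ _ _ Hob (HP Y HY)) (edge_not_int _ _ _ _ Hob (HQ Y HY)))
      with (l := [Q]) as [s [x [Hs [Hx Hpx]]]].
    - intros l Hsh _. exists (mk mid Y). split; [apply Hpass; auto|apply Hint; auto].
    - apply single_shortest. apply (fr_ax1 _ _ _ F). exact HPQ.
    - apply single_amoc.
    - exists s, x. split; [exact Hs|]. split; [exact Hx|].
      simpl in Hpx. destruct Hpx as [Hpx|Hpx].
      + destruct (fr_seg_h _ _ _ F _ _ _ Hpx) as [t [_ Ht]]. rewrite Ht, HPQ.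
        unfold Q. rewrite (fr_hm _ _ _ F). ring.
      + rewrite Hpx. unfold Q. apply (fr_hm _ _ _ F). }
  destruct (classic (exists s, In s Sk /\ (h (fst s) = H \/ h (snd s) = H))) as [Ex|NEx].
  - destruct Ex as [s [Hs HE]]. exists s. split; [exact Hs|].
    destruct Hsk as [Hins _].
    destruct HE as [HE|HE]; [left|right];
      (eapply (vert_arg V w h u mk F i H); eauto);
      (eapply Hins; [exact Hs|]); unfold seg_of; [apply seg_start|apply seg_end].
  - exfalso. destruct Hsk as [Hins Hsk'].
    destruct (list_bound Sk (fun s => Rmax (h (fst s)) (h (snd s))) H) as [h0 [Hh0 Hbd]].
    { intros s Hs. apply Rmax_lub_lt.
      - assert (h (fst s) <= H) by (apply Hw; eapply Hins; [exact Hs|apply seg_start]).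
        destruct (Req_dec (h (fst s)) H); [|lra]. exfalso; apply NEx; eauto.
      - assert (h (snd s) <= H) by (apply Hw; eapply Hins; [exact Hs|apply seg_end]).
        destruct (Req_dec (h (snd s)) H); [|lra]. exfalso; apply NEx; eauto. }
    set (Y := (Rmax h0 y0 + H) / 2).
    assert (HY : y0 < Y < H).
    { unfold Y. pose proof (Rmax_r h0 y0). pose proof (Rmax_lub_lt h0 y0 H Hh0 Hy0). lra. }
    destruct (Hhit Y HY) as [s [x [Hs [Hx Hhx]]]].
    destruct (fr_seg_h _ _ _ F _ _ _ Hx) as [t [Ht Hxt]].
    pose proof (Hbd s Hs) as B. simpl in B.
    pose proof (Rmax_l (h (fst s)) (h (snd s))). pose proof (Rmax_r (h (fst s)) (h (snd s))).
    pose proof (Rmax_l h0 y0).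
    assert (Y <= h0).
    { rewrite <- Hhx, Hxt. nra. }
    unfold Y in *. lra.
Qed.


Lemma rect_closure x1 x2 y1 y2 p : closure (rect x1 x2 y1 y2) p -> rect x1 x2 y1 y2 p.
Proof.
  intros Hc. unfold rect.
  assert (G : forall e, 0 < e -> exists q, Rabs (fst p - fst q) < e /\ Rabs (snd p - snd q) < e /\ rect x1 x2 y1 y2 q).
  { intros e He. destruct (Hc e He) as [q [Hq Hr]]. exists q.
    destruct (dist_abs p q e He Hq). auto. }
  unfold rect in G.
  repeat split; apply Rnot_lt_le; intros Hlt;
  [ destruct (G (x1 - fst p)) as [q [A [B [[C1 C2] _]]]]
  | destruct (G (fst p - x2)) as [q [A [B [[C1 C2] _]]]]
  | destruct (G (y1 - snd p)) as [q [A [B [_ [C1 C2]]]]]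
  | destruct (G (snd p - y2)) as [q [A [B [_ [C1 C2]]]]] ]; try lra;
  revert A B; unfold Rabs; repeat destruct Rcase_abs; intros; lra.
Qed.

Lemma rect_int x1 x2 y1 y2 p : x1 < fst p < x2 -> y1 < snd p < y2 -> interior (rect x1 x2 y1 y2) p.
Proof.
  intros Hx Hy.
  set (r := Rmin (Rmin (fst p - x1) (x2 - fst p)) (Rmin (snd p - y1) (y2 - snd p))).
  assert (Hr : 0 < r) by (unfold r; repeat apply Rmin_glb_lt; lra).
  assert (R1 : r <= fst p - x1) by (unfold r; eapply Rle_trans; [apply Rmin_l|apply Rmin_l]).
  assert (R2 : r <= x2 - fst p) by (unfold r; eapply Rle_trans; [apply Rmin_l|apply Rmin_r]).
  assert (R3 : r <= snd p - y1) by (unfold r; eapply Rle_trans; [apply Rmin_r|apply Rmin_l]).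
  assert (R4 : r <= y2 - snd p) by (unfold r; eapply Rle_trans; [apply Rmin_r|apply Rmin_r]).
  exists r. split; [exact Hr|]. intros q Hq. destruct (dist_abs p q r Hr Hq) as [A B].
  revert A B. unfold rect, Rabs; repeat destruct Rcase_abs; intros; repeat split; lra.
Qed.

Lemma pair_eq (a b : pt) : fst a = fst b -> snd a = snd b -> a = b.
Proof. destruct a, b; simpl; intros; subst; reflexivity. Qed.

Lemma lemma2_aux (V : list pt) (w : region) (Sk : list (pt * pt)) :
  is_obstacle V w -> rect_convex V w -> skeleton w Sk ->
  forall i, extreme_edge V w i ->
    exists s, In s Sk /\ (edge_of V i (fst s) \/ edge_of V i (snd s)).
Proof.
  intros Hob Hrc Hsk i [Hi [x1 [x2 [y1 [y2 [[Hbb _] Hfr]]]]]].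
  pose proof (len3 _ _ Hob) as Hn3.
  destruct (idx_dist (length V) i Hn3 Hi) as (D1 & D2 & D3 & _).
  set (a := vtx V i) in *. set (b := vtx V (S i)) in *.
  set (M := (fst a + / 2 * (fst b - fst a), snd a + / 2 * (snd b - snd a))).
  assert (HM : edge_of V i M) by (exists (/2); split; [lra|reflexivity]).
  assert (Ra : rect x1 x2 y1 y2 a) by (apply rect_closure, (Hfr a), vtx_edge).
  assert (Rb : rect x1 x2 y1 y2 b) by (apply rect_closure, (Hfr b), vtx_edge').
  assert (NM : ~ interior (rect x1 x2 y1 y2) M) by apply (Hfr M HM).
  assert (Hab : a <> b).
  { intros E. apply (gp3 V w i (S i) (S (S i)) Hob); auto. fold a b. rewrite E.
    unfold collinear. ring. }
  destruct (rect_any V w i Hob (proj1 Hrc)) as [E|E]; fold a b in E; unfold rect in Ra, Rb.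
  - assert (Hs : snd a <> snd b) by (intros E'; apply Hab; apply pair_eq; auto).
    destruct (Req_dec (fst a) x1) as [A1|A1].
    + apply (core V w Sk _ _ _ frame_left i (- x1)); auto; cbv beta.
      * intros p Hp. destruct (Hbb p Hp). lra.
      * fold a. lra.
      * fold b. lra.
    + destruct (Req_dec (fst a) x2) as [A2|A2].
      * apply (core V w Sk _ _ _ frame_right i x2); auto.
        -- intros p Hp. destruct (Hbb p Hp). lra.
        -- fold b. lra.
      * exfalso. apply NM. apply rect_int; simpl.
        -- split; lra.
        -- destruct (Rtotal_order (snd a) (snd b)) as [T|[T|T]]; [split; lra|exfalso; auto|split; lra].
  - assert (Hs : fst a <> fst b) by (intros E'; apply Hab; apply pair_eq; auto).
    destruct (Req_dec (snd a) y1) as [A1|A1].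
    + apply (core V w Sk _ _ _ frame_bot i (- y1)); auto; cbv beta.
      * intros p Hp. destruct (Hbb p Hp). lra.
      * fold a. lra.
      * fold b. lra.
    + destruct (Req_dec (snd a) y2) as [A2|A2].
      * apply (core V w Sk _ _ _ frame_top i y2); auto.
        -- intros p Hp. destruct (Hbb p Hp). lra.
        -- fold b. lra.
      * exfalso. apply NM. apply rect_int; simpl.
        -- destruct (Rtotal_order (fst a) (fst b)) as [T|[T|T]]; [split; lra|exfalso; auto|split; lra].
        -- split; lra.
Qed.


Theorem lemma2 (V : list pt) (w : region) (S : list (pt * pt)) :
  is_obstacle V w -> rect_convex V w -> skeleton w S ->
  forall i, extreme_edge V w i ->
    exists s, In s S /\ (edge_of V i (fst s) \/ edge_of V i (snd s)).
Proof.
  exact (lemma2_aux V w S).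
Qed.
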